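(* Let $p_0>2$ be a rational number with continued fraction expansion $$p_0=\nu_1+\cfrac{1}{\nu_2+\cfrac{1}{\ddots+\cfrac{1}{\nu_\alpha}}},\qquad \alpha\ge1,\ \nu_1,\dots,\nu_\alpha\in\mathbb{Z}_{\ge1}.$$ Define $y_{-1}=0,\ y_0=1,\ z_{-1}=1,\ z_0=0$ and $y_j=y_{j-2}+\nu_jy_{j-1}$, $z_j=z_{j-2}+\nu_jz_{j-1}$ for $1\le j\le\alpha$. Let $\theta=\pi/p_0$, let $N$ be an even positive integer, $u\in\mathbb{C}$, $m\in\{0,1,\dots,N/2\}$, and let $\omega_1,\dots,\omega_m$ solve the Bethe ansatz equations $$-\Biggl(\frac{\sinh\frac{\theta}{2}\bigl(\omega_j+i(u+2)\bigr)\sinh\frac{\theta}{2}(\omega_j-iu)}{\sinh\frac{\theta}{2}\bigl(\omega_j-i(u+2)\bigr)\sinh\frac{\theta}{2}(\omega_j+iu)}\Biggr)^{N/2}=\frac{Q(\omega_j+2i)}{Q(\omega_j-2i)},\qquad j=1,\dots,m,$$ where $Q(v)=\prod_{k=1}^m\sinh\frac{\theta}{2}(v-\omega_k)$. For integers $n\ge0$ let $$T_{n-1}(v)=\sum_{j=1}^{n}\phi\bigl(v-i(u+n+2-2j)\bigr)\phi\bigl(v+i(u-n+2j)\bigr)\frac{Q(v+in)Q(v-in)}{Q\bigl(v+i(2j-n)\bigr)Q\bigl(v+i(2j-n-2)\bigr)},\quad \phi(v)=\Bigl(\frac{\sinh\frac{\theta}{2}v}{\sin\theta}\Bigr)^{N/2}.$$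 Then, as an identity of meromorphic functions of $v$, $$T_{y_\alpha+y_{\alpha-1}-1}(v)=T_{y_\alpha-y_{\alpha-1}-1}(v)+2(-1)^{mz_\alpha}\,T_{y_{\alpha-1}-1}(v+iy_\alpha).$$
   Context: $T_{n-1}(v)$ are the eigenvalues (dressed vacuum form) of the fusion hierarchy of quantum transfer matrices of the six-vertex model related to the XXZ chain with $\Delta=\cos(\pi/p_0)$; $\sinh$ is the hyperbolic sine. The numbers $y_j,z_j$ are the Takahashi–Suzuki data attached to $p_0$. *)

(* Defs.v *)
From Stdlib Require Import Reals ZArith.
From Coquelicot Require Import Coquelicot.
Open Scope R_scope.
Open Scope C_scope.

Definition Cexp (z : C) : C :=
  ((exp (Re z) * cos (Im z))%R, (exp (Re z) * sin (Im z))%R).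
Definition Csinh (z : C) : C := (Cexp z - Cexp (- z)) / 2.

Fixpoint Cpown (z : C) (n : nat) : C :=
  match n with O => 1 | S k => z * Cpown z k end.

Fixpoint Csum1 (n : nat) (f : nat -> C) : C :=
  match n with O => 0 | S k => Csum1 k f + f (S k) end.

Fixpoint Cprod1 (n : nat) (f : nat -> C) : C :=
  match n with O => 1 | S k => Cprod1 k f * f (S k) end.

Fixpoint cf_from (nu : nat -> nat) (k fuel : nat) : R :=
  match fuel with
  | O => INR (nu k)
  | S f => INR (nu k) + / cf_from nu (S k) f
  end.
Definition cf_value (nu : nat -> nat) (alpha : nat) : R := cf_from nu 1 (alpha - 1).

(* pair (x_{j-1}, x_j) for x_{-1} = a, x_0 = b, x_j = x_{j-2} + nu_j x_{j-1} *)
Fixpoint ts_pair (nu : nat -> nat) (a b : nat) (j : nat) : nat * nat :=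
  match j with
  | O => (a, b)
  | S k => let (p, q) := ts_pair nu a b k in (q, (p + nu (S k) * q)%nat)
  end.
(* Takahashi--Suzuki numbers: y_j, z_j (valid for j >= -1 via y_{j-1} = fst) *)
Definition ts_y (nu : nat -> nat) (j : nat) : nat := snd (ts_pair nu 0 1 j).
Definition ts_z (nu : nat -> nat) (j : nat) : nat := snd (ts_pair nu 1 0 j).
Definition ts_y_prev (nu : nat -> nat) (j : nat) : nat := fst (ts_pair nu 0 1 j).

Definition Qfun (theta : R) (m : nat) (omega : nat -> C) (v : C) : C :=
  Cprod1 m (fun k => Csinh ((theta / 2)%R * (v - omega k))).

Definition phifun (theta : R) (N : nat) (v : C) : C :=
  Cpown (Csinh ((theta / 2)%R * v) / sin theta) (N / 2)%nat.

(* Tm1 n v = T_{n-1}(v) *)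
Definition Tm1 (theta : R) (N : nat) (u : C) (m : nat) (omega : nat -> C)
    (n : nat) (v : C) : C :=
  let Q := Qfun theta m omega in
  let nR := INR n in
  Csum1 n (fun j =>
    let jR := INR j in
    phifun theta N (v - Ci * (u + nR + 2 - 2 * jR))
    * phifun theta N (v + Ci * (u - nR + 2 * jR))
    * (Q (v + Ci * nR) * Q (v - Ci * nR))
    / (Q (v + Ci * (2 * jR - nR)) * Q (v + Ci * (2 * jR - nR - 2)))).

Definition BAE (theta : R) (N : nat) (u : C) (m : nat) (omega : nat -> C) : Prop :=
  forall j : nat, (1 <= j <= m)%nat ->
    - Cpown ((Csinh ((theta / 2)%R * (omega j + Ci * (u + 2)))
             * Csinh ((theta / 2)%R * (omega j - Ci * u)))
            / (Csinh ((theta / 2)%R * (omega j - Ci * (u + 2)))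
               * Csinh ((theta / 2)%R * (omega j + Ci * u)))) (N / 2)%nat
    = Qfun theta m omega (omega j + 2 * Ci) / Qfun theta m omega (omega j - 2 * Ci).

(* Main.v *)
Require Import Defs.
From Stdlib Require Import Reals ZArith Arith Lia Lra.
From Coquelicot Require Import Coquelicot.
Open Scope R_scope.
Open Scope C_scope.

Definition Tgen (Phi Qf : C -> C) (u : C) (n : nat) (v : C) : C :=
  let nR := INR n in
  Csum1 n (fun j =>
    let jR := INR j in
    Phi (v - Ci * (u + nR + 2 - 2 * jR))
    * Phi (v + Ci * (u - nR + 2 * jR))
    * (Qf (v + Ci * nR) * Qf (v - Ci * nR))
    / (Qf (v + Ci * (2 * jR - nR)) * Qf (v + Ci * (2 * jR - nR - 2)))).

Lemma Tm1_Tgen theta N u m omega n v :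
  Tm1 theta N u m omega n v = Tgen (phifun theta N) (Qfun theta m omega) u n v.
Proof. reflexivity. Qed.

Definition Gf (Phi Qf : C -> C) (u v x : C) : C :=
  Phi (v - Ci * (u - x + 2)) * Phi (v + Ci * (u + x))
  / (Qf (v + Ci * x) * Qf (v + Ci * (x - 2))).

Definition SS (Phi Qf : C -> C) (u v a : C) (c : nat) : C :=
  Csum1 c (fun j => Gf Phi Qf u v (a + 2 * INR j)).

Lemma Csum1_ext n f g : (forall j, f j = g j) -> Csum1 n f = Csum1 n g.
Proof. intros H; induction n; simpl; [reflexivity| rewrite IHn, H; reflexivity]. Qed.

Lemma Csum1_scal n K f : Csum1 n (fun j => K * f j) = K * Csum1 n f.
Proof. induction n; simpl; [ring| rewrite IHn; ring]. Qed.

Lemma Csum1_add a b f : Csum1 (a + b) f = Csum1 a f + Csum1 b (fun j => f (a + j)%nat).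
Proof.
  induction b; simpl.
  - rewrite Nat.add_0_r; ring.
  - rewrite Nat.add_succ_r; simpl; rewrite IHb; ring.
Qed.

Lemma T_as Phi Qf u n v :
  Tgen Phi Qf u n v = Qf (v + Ci * INR n) * Qf (v - Ci * INR n) * SS Phi Qf u v (- INR n) n.
Proof.
  unfold Tgen, SS. rewrite <- Csum1_scal. apply Csum1_ext; intro j. unfold Gf.
  set (nR := RtoC (INR n)). set (jR := RtoC (INR j)).
  replace (v - Ci * (u - (- nR + 2 * jR) + 2)) with (v - Ci * (u + nR + 2 - 2 * jR)) by ring.
  replace (v + Ci * (u + (- nR + 2 * jR))) with (v + Ci * (u - nR + 2 * jR)) by ring.
  replace (v + Ci * (- nR + 2 * jR)) with (v + Ci * (2 * jR - nR)) by ring.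
  replace (v + Ci * (- nR + 2 * jR - 2)) with (v + Ci * (2 * jR - nR - 2)) by ring.
  unfold Cdiv; ring.
Qed.

Lemma SS_split Phi Qf u v a c1 c2 :
  SS Phi Qf u v a (c1 + c2) = SS Phi Qf u v a c1 + SS Phi Qf u v (a + 2 * INR c1) c2.
Proof.
  unfold SS. rewrite Csum1_add. f_equal. apply Csum1_ext; intro j.
  rewrite plus_INR, RtoC_plus. f_equal. ring.
Qed.

Lemma SS_shift Phi Qf u v Y a c :
  SS Phi Qf u (v + Ci * Y) a c = SS Phi Qf u v (a + Y) c.
Proof.
  unfold SS. apply Csum1_ext; intro j. unfold Gf.
  set (jR := RtoC (INR j)).
  replace (v + Ci * Y - Ci * (u - (a + 2 * jR) + 2)) with (v - Ci * (u - (a + Y + 2 * jR) + 2)) by ring.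
  replace (v + Ci * Y + Ci * (u + (a + 2 * jR))) with (v + Ci * (u + (a + Y + 2 * jR))) by ring.
  replace (v + Ci * Y + Ci * (a + 2 * jR)) with (v + Ci * (a + Y + 2 * jR)) by ring.
  replace (v + Ci * Y + Ci * (a + 2 * jR - 2)) with (v + Ci * (a + Y + 2 * jR - 2)) by ring.
  reflexivity.
Qed.

Lemma SS_per Phi Qf u v P s t a c :
  s * s = 1 -> t * t = 1 ->
  (forall w, Phi (w - Ci * P) = t * Phi w) ->
  (forall w, Qf (w - Ci * P) = s * Qf w) ->
  SS Phi Qf u v (a - P) c = SS Phi Qf u v a c.
Proof.
  intros Hs Ht HP HQ.
  unfold SS. apply Csum1_ext; intro j. unfold Gf.
  set (jR := RtoC (INR j)).
  replace (v - Ci * (u - (a - P + 2 * jR) + 2)) with ((v - Ci * (u - (a + 2 * jR) + 2)) - Ci * P) by ring.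
  replace (v + Ci * (u + (a - P + 2 * jR))) with ((v + Ci * (u + (a + 2 * jR))) - Ci * P) by ring.
  replace (v + Ci * (a - P + 2 * jR)) with ((v + Ci * (a + 2 * jR)) - Ci * P) by ring.
  replace (v + Ci * (a - P + 2 * jR - 2)) with ((v + Ci * (a + 2 * jR - 2)) - Ci * P) by ring.
  rewrite !HP, !HQ.
  set (A := Phi (v - Ci * (u - (a + 2 * jR) + 2))).
  set (B := Phi (v + Ci * (u + (a + 2 * jR)))).
  set (D := Qf (v + Ci * (a + 2 * jR))).
  set (E := Qf (v + Ci * (a + 2 * jR - 2))).
  replace (t * A * (t * B)) with (A * B) by (transitivity ((t * t) * (A * B)); [rewrite Ht; ring | ring]).
  replace (s * D * (s * E)) with (D * E) by (transitivity ((s * s) * (D * E)); [rewrite Hs; ring | ring]).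
  reflexivity.
Qed.

Lemma key Phi Qf u v (y y' : nat) s t :
  (y' <= y)%nat -> s * s = 1 -> t * t = 1 ->
  (forall w, Phi (w - Ci * (2 * INR y)) = t * Phi w) ->
  (forall w, Qf (w - Ci * (2 * INR y)) = s * Qf w) ->
  Tgen Phi Qf u (y + y') v
  = Tgen Phi Qf u (y - y') v + 2 * s * Tgen Phi Qf u y' (v + Ci * INR y).
Proof.
  intros Hle Hs Ht HP HQ.
  rewrite !T_as.
  rewrite SS_shift.
  rewrite plus_INR, (minus_INR _ _ Hle), RtoC_plus, RtoC_minus.
  replace (y + y')%nat with (y' + (y - y') + y')%nat by lia.
  rewrite !SS_split.
  rewrite !plus_INR, (minus_INR _ _ Hle), !RtoC_plus, !RtoC_minus.
  set (Y := RtoC (INR y)) in *. set (Y' := RtoC (INR y')).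
  assert (E1 : SS Phi Qf u v (- (Y + Y')) y' = SS Phi Qf u v (Y - Y') y').
  { rewrite <- (SS_per Phi Qf u v (2 * Y) s t (Y - Y') y' Hs Ht HP HQ). f_equal. ring. }
  assert (E2 : SS Phi Qf u v (- (Y + Y') + 2 * (Y' + (Y - Y'))) y' = SS Phi Qf u v (Y - Y') y').
  { f_equal. ring. }
  assert (E3 : SS Phi Qf u v (- Y' + Y) y' = SS Phi Qf u v (Y - Y') y').
  { f_equal. ring. }
  assert (E4 : SS Phi Qf u v (- (Y + Y') + 2 * Y') (y - y') = SS Phi Qf u v (- (Y - Y')) (y - y')).
  { f_equal. ring. }
  assert (E5 : Qf (v - Ci * (Y + Y')) = s * Qf (v + Ci * (Y - Y'))).
  { rewrite <- HQ. f_equal. ring. }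
  assert (E6 : Qf (v - Ci * (Y - Y')) = s * Qf (v + Ci * (Y + Y'))).
  { rewrite <- HQ. f_equal. ring. }
  assert (E7 : Qf (v + Ci * Y + Ci * Y') = Qf (v + Ci * (Y + Y'))). { f_equal. ring. }
  assert (E8 : Qf (v + Ci * Y - Ci * Y') = Qf (v + Ci * (Y - Y'))). { f_equal. ring. }
  rewrite E1, E2, E3, E4, E5, E6, E7, E8.
  ring.
Qed.
Lemma Cexp_PI_m w : Cexp (w - Ci * PI) = - Cexp w.
Proof.
  assert (HR : Re (w - Ci * PI) = Re w) by (destruct w; simpl; ring).
  assert (HI : Im (w - Ci * PI) = (Im w - PI)%R) by (destruct w; simpl; ring).
  unfold Cexp. rewrite HR, HI.
  assert (Hc : cos (Im w - PI) = (- cos (Im w))%R).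
  { pose proof (neg_cos (Im w - PI)) as H. replace (Im w - PI + PI)%R with (Im w) in H by ring. lra. }
  assert (Hs : sin (Im w - PI) = (- sin (Im w))%R).
  { pose proof (neg_sin (Im w - PI)) as H. replace (Im w - PI + PI)%R with (Im w) in H by ring. lra. }
  rewrite Hc, Hs. unfold Copp. simpl. f_equal; ring.
Qed.

Lemma Cexp_PI_p w : Cexp (w + Ci * PI) = - Cexp w.
Proof.
  assert (HR : Re (w + Ci * PI) = Re w) by (destruct w; simpl; ring).
  assert (HI : Im (w + Ci * PI) = (Im w + PI)%R) by (destruct w; simpl; ring).
  unfold Cexp. rewrite HR, HI, neg_cos, neg_sin. unfold Copp. simpl. f_equal; ring.
Qed.

Lemma Csinh_PI w : Csinh (w - Ci * PI) = - Csinh w.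
Proof.
  unfold Csinh. replace (- (w - Ci * PI)) with (- w + Ci * PI) by ring.
  rewrite Cexp_PI_m, Cexp_PI_p. unfold Cdiv. ring.
Qed.

Lemma Csinh_per (z : nat) w : Csinh (w - Ci * (RtoC PI * RtoC (INR z))) = Cpown (-1) z * Csinh w.
Proof.
  induction z.
  - simpl. replace (w - Ci * (RtoC PI * RtoC 0)) with w. ring.
    replace (RtoC 0) with (0 : C) by reflexivity. ring.
  - rewrite S_INR, RtoC_plus.
    replace (w - Ci * (RtoC PI * (RtoC (INR z) + RtoC 1))) with ((w - Ci * (RtoC PI * RtoC (INR z))) - Ci * PI).
    + rewrite Csinh_PI, IHz. simpl. ring.
    + replace (RtoC 1) with (1 : C) by reflexivity. ring.
Qed.

Lemma Cpown_mult a b k : Cpown (a * b) k = Cpown a k * Cpown b k.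
Proof. induction k; simpl; [ring| rewrite IHk; ring]. Qed.

Lemma Cpown_add a p q : Cpown a (p + q) = Cpown a p * Cpown a q.
Proof. induction p; simpl; [ring| rewrite IHp; ring]. Qed.

Lemma Cpown_mul a m z : Cpown (Cpown a z) m = Cpown a (m * z).
Proof. induction m; simpl; [reflexivity| rewrite IHm, Cpown_add; reflexivity]. Qed.

Lemma Cpown_m1_sq n : Cpown (-1) n * Cpown (-1) n = 1.
Proof.
  induction n; simpl; [ring|].
  transitivity ((-1 * -1) * (Cpown (-1) n * Cpown (-1) n)); [ring|]. rewrite IHn. ring.
Qed.

Lemma Cprod1_ext n f g : (forall j, f j = g j) -> Cprod1 n f = Cprod1 n g.
Proof. intros H; induction n; simpl; [reflexivity| rewrite IHn, H; reflexivity]. Qed.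

Lemma Cprod1_scal n c f : Cprod1 n (fun k => c * f k) = Cpown c n * Cprod1 n f.
Proof. induction n; simpl; [ring| rewrite IHn; ring]. Qed.

Lemma ts_S s a b j : ts_pair s a b (S j) =
  (snd (ts_pair s a b j), (fst (ts_pair s a b j) + s (S j) * snd (ts_pair s a b j))%nat).
Proof. simpl. destruct (ts_pair s a b j); reflexivity. Qed.

Lemma ts_prepend s a b j :
  ts_pair s a b (S j) = ts_pair (fun i => s (S i)) b (a + s 1%nat * b)%nat j.
Proof.
  induction j.
  - reflexivity.
  - rewrite ts_S, IHj, (ts_S (fun i => s (S i))). reflexivity.
Qed.

Lemma ts_lin s a b j : ts_pair s a b j =
  ((a * fst (ts_pair s 1 0 j) + b * fst (ts_pair s 0 1 j))%nat,
   (a * snd (ts_pair s 1 0 j) + b * snd (ts_pair s 0 1 j))%nat).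
Proof.
  induction j.
  - simpl. f_equal; ring.
  - rewrite !ts_S, IHj. simpl. f_equal; ring.
Qed.

Lemma cf_ext f g k n : (forall i, f i = g i) -> cf_from f k n = cf_from g k n.
Proof.
  intros H. revert k; induction n; intro k; simpl; rewrite H; [reflexivity| rewrite IHn; reflexivity].
Qed.

Lemma cf_shift f : forall nu k, cf_from nu (S k) f = cf_from (fun i => nu (i + k)%nat) 1 f.
Proof.
  induction f; intros nu k.
  - reflexivity.
  - simpl. rewrite (IHf nu (S k)), (IHf (fun i => nu (i + k)%nat) 1%nat).
    f_equal. f_equal. apply cf_ext. intro i. f_equal. lia.
Qed.

Lemma cf_main f : forall s, (forall i, (1 <= i <= S f)%nat -> (1 <= s i)%nat) ->
  (0 < ts_y s (S f))%nat /\ (0 < ts_z s (S f))%nat /\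
  cf_from s 1 f = (INR (ts_y s (S f)) / INR (ts_z s (S f)))%R.
Proof.
  induction f; intros s Hs.
  - unfold ts_y, ts_z. simpl. rewrite Nat.mul_1_r, Nat.mul_0_r. simpl.
    assert (H1 := Hs 1%nat ltac:(lia)).
    split; [lia| split; [lia|]]. field.
  - set (s' := fun i => s (S i)).
    destruct (IHf s') as [HY [HZ HC]].
    { intros i Hi. unfold s'. apply Hs. lia. }
    assert (Ey : ts_y s (S (S f)) = (ts_z s' (S f) + s 1%nat * ts_y s' (S f))%nat).
    { unfold ts_y, ts_z. rewrite ts_prepend, ts_lin. cbn [fst snd]. unfold s'. ring. }
    assert (Ez : ts_z s (S (S f)) = ts_y s' (S f)).
    { unfold ts_y, ts_z. rewrite ts_prepend, ts_lin. cbn [fst snd]. unfold s'. ring. }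
    assert (H1 := Hs 1%nat ltac:(lia)).
    rewrite Ey, Ez. split; [nia| split; [lia|]].
    simpl cf_from. rewrite (cf_shift f s 1). rewrite (cf_ext _ s' 1 f) by (intro i; unfold s'; f_equal; lia).
    rewrite HC, plus_INR, mult_INR.
    apply lt_0_INR in HY. apply lt_0_INR in HZ.
    field. split; apply Rgt_not_eq; assumption.
Qed.

Lemma ts_mono nu j : (forall i, (1 <= i <= j)%nat -> (1 <= nu i)%nat) ->
  (fst (ts_pair nu 0 1 j) <= snd (ts_pair nu 0 1 j))%nat.
Proof.
  intros H. destruct j.
  - simpl. lia.
  - rewrite ts_S. cbn [fst snd]. assert (H1 := H (S j) ltac:(lia)). nia.
Qed.

Theorem mainTheorem2
  (alpha : nat) (nu : nat -> nat) (p0 : R)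
  (Halpha : (1 <= alpha)%nat)
  (Hnu : forall j : nat, (1 <= j <= alpha)%nat -> (1 <= nu j)%nat)
  (Hp0 : p0 = cf_value nu alpha)
  (Hp0gt : (2 < p0)%R)
  (N : nat) (HNeven : Nat.Even N) (HNpos : (0 < N)%nat)
  (u : C) (m : nat) (Hm : (m <= N / 2)%nat) (omega : nat -> C)
  (HBAE : BAE (PI / p0)%R N u m omega)
  (v : C)
  (Hv : forall k : Z, Qfun (PI / p0)%R m omega (v + Ci * IZR k) <> 0) :
  let theta := (PI / p0)%R in
  let ya := ts_y nu alpha in
  let ya1 := ts_y_prev nu alpha in
  let za := ts_z nu alpha in
  Tm1 theta N u m omega (ya + ya1)%nat v
  = Tm1 theta N u m omega (ya - ya1)%nat v
    + 2 * Cpown (-1) (m * za)%nat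
        * Tm1 theta N u m omega ya1 (v + Ci * INR ya).
Proof.
  intros theta ya ya1 za.
  destruct alpha as [|f]; [lia|].
  destruct (cf_main f nu Hnu) as [HY [HZ HC]].
  assert (Hp : p0 = (INR ya / INR za)%R).
  { rewrite Hp0. unfold cf_value. replace (S f - 1)%nat with f by lia. exact HC. }
  assert (HYr : (0 < INR ya)%R) by (apply lt_0_INR; exact HY).
  assert (HZr : (0 < INR za)%R) by (apply lt_0_INR; exact HZ).
  assert (Hr : (theta / 2 * (2 * INR ya) = PI * INR za)%R).
  { unfold theta. rewrite Hp. field. split; apply Rgt_not_eq; assumption. }
  assert (HC2 : RtoC (theta / 2) * (2 * RtoC (INR ya)) = RtoC PI * RtoC (INR za)).
  { rewrite <- !RtoC_mult, Hr. reflexivity. }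
  assert (Hle : (ya1 <= ya)%nat) by (apply ts_mono; exact Hnu).
  rewrite !Tm1_Tgen.
  apply (key _ _ u v ya ya1 (Cpown (-1) (m * za)) (Cpown (-1) ((N / 2) * za)) Hle).
  - apply Cpown_m1_sq.
  - apply Cpown_m1_sq.
  - intro w. unfold phifun.
    replace (RtoC (theta / 2) * (w - Ci * (2 * RtoC (INR ya))))
      with (RtoC (theta / 2) * w - Ci * (RtoC (theta / 2) * (2 * RtoC (INR ya)))) by ring.
    rewrite HC2, Csinh_per, <- Cpown_mul, <- Cpown_mult. f_equal. unfold Cdiv. ring.
  - intro w. unfold Qfun. rewrite <- Cpown_mul, <- Cprod1_scal. apply Cprod1_ext. intro k.
    replace (RtoC (theta / 2) * (w - Ci * (2 * RtoC (INR ya)) - omega k))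
      with (RtoC (theta / 2) * (w - omega k) - Ci * (RtoC (theta / 2) * (2 * RtoC (INR ya)))) by ring.
    rewrite HC2, Csinh_per. reflexivity.
Qed.
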